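(* For every $P$-point ultrafilter $U$ on $\omega$, the space $S_\omega$ is $U$-selective: for every lower semicontinuous $\varphi:Y_U\rightarrow\mathcal{F}(S_\omega)$ there is a continuous $s:Y_U\rightarrow S_\omega$ with $s(y)\in\varphi(y)$ for all $y\in Y_U$.
   Context: $\mathcal{F}(X)$ denotes the set of nonempty closed subsets of a space $X$; a map $\varphi:Y\rightarrow\mathcal{F}(X)$ is lower semicontinuous if for every open $W\subseteq X$ the set $\{y:\varphi(y)\cap W\neq\emptyset\}$ is open in $Y$. For a filter $F$ on $\omega$, $Y_F$ is the space on $\omega\cup\{\infty\}$ with points of $\omega$ isolated and neighborhoods of $\infty$ the sets $A\cup\{\infty\}$, $A\in F$. An ultrafilter $U$ on $\omega$ is a $P$-point if every function $\omega\rightarrow\omega$ is either constant or finite-to-one on some set in $U$. $S_\omega$ is the space on $(\omega\times\omega)\cup\{\infty\}$ in which points of $\omega\times\omega$ are isolated and a set containing $\infty$ is a neighborhood of $\infty$ iff it contains all but finitely many points of each spine $\{m\}\times\omega$; equivalently, a neighborhood base at $\infty$ is given by the sets $W_f=\{\infty\}\cup\{(m,n):n>f(m)\}$ for $f\in{}^\omega\omega$. *)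

(* Defs.v *)
From Stdlib Require Import Arith.

Definition is_filter (F : (nat -> Prop) -> Prop) : Prop :=
  F (fun _ => True) /\
  ~ F (fun _ => False) /\
  (forall A B : nat -> Prop, F A -> (forall n, A n -> B n) -> F B) /\
  (forall A B : nat -> Prop, F A -> F B -> F (fun n => A n /\ B n)).

Definition is_ultrafilter (U : (nat -> Prop) -> Prop) : Prop :=
  is_filter U /\ forall A : nat -> Prop, U A \/ U (fun n => ~ A n).

Definition is_P_point (U : (nat -> Prop) -> Prop) : Prop :=
  is_ultrafilter U /\
  forall f : nat -> nat, exists A : nat -> Prop, U A /\
    ((exists c, forall n, A n -> f n = c) \/
     (forall k, exists N, forall n, A n -> f n = k -> n < N)).

(* carrier: option nat, None = ∞, Some n = n ∈ omega (isolated). *)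
Definition Y_open (F : (nat -> Prop) -> Prop) (W : option nat -> Prop) : Prop :=
  W None -> F (fun n => W (Some n)).

(* carrier: option (nat*nat), None = ∞.  A set containing ∞ is a
   neighbourhood of ∞ iff it contains all but finitely many points of each
   spine {m} x omega. *)
Definition S_open (W : option (nat * nat) -> Prop) : Prop :=
  W None -> forall m : nat, exists k : nat, forall n : nat, k < n -> W (Some (m, n)).

Definition S_closed (C : option (nat * nat) -> Prop) : Prop :=
  S_open (fun x => ~ C x).

Definition in_FS (C : option (nat * nat) -> Prop) : Prop :=
  (exists x, C x) /\ S_closed C.

Definition lsc (U : (nat -> Prop) -> Prop)
    (phi : option nat -> option (nat * nat) -> Prop) : Prop :=
  forall W : option (nat * nat) -> Prop, S_open W ->
    Y_open U (fun y => exists x, phi y x /\ W x).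

Definition continuous_YS (U : (nat -> Prop) -> Prop)
    (s : option nat -> option (nat * nat)) : Prop :=
  forall W : option (nat * nat) -> Prop, S_open W -> Y_open U (fun y => W (s y)).

(* Main.v *)
Require Import Defs.
From Stdlib Require Import Arith Lia Classical ClassicalEpsilon.

Lemma f_mono U (H: is_filter U) (A B: nat -> Prop) : U A -> (forall n, A n -> B n) -> U B.
Proof. destruct H as [_ [_ [H _]]]. eauto. Qed.
Lemma f_and U (H: is_filter U) (A B : nat -> Prop) : U A -> U B -> U (fun n => A n /\ B n).
Proof. destruct H as [_ [_ [_ H]]]. eauto. Qed.
Lemma f_ne U (H: is_filter U) (A : nat -> Prop) : U A -> exists n, A n.
Proof.
  intro HA. destruct (classic (exists n, A n)) as [|Hn]; auto.
  exfalso. apply (proj1 (proj2 H)). apply (f_mono U H A); auto.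
  intros n An; apply Hn; eauto.
Qed.

Lemma least (P: nat -> Prop) : (exists m, P m) -> exists m, P m /\ forall m', m' < m -> ~ P m'.
Proof.
  intros [m Hm]. revert Hm. induction m as [m IH] using lt_wf_ind. intro Hm.
  destruct (classic (exists m', m' < m /\ P m')) as [[m' [Hlt Hm']]|Hno].
  - exact (IH m' Hlt Hm').
  - exists m. split; auto. intros m' Hlt Hm'. apply Hno; eauto.
Qed.

Lemma maxj_aux (P: nat -> Prop) d : forall j, P j -> (forall j', j + d < j' -> ~ P j') ->
  exists js, P js /\ forall j', js < j' -> ~ P j'.
Proof.
  induction d as [|d IH]; intros j Pj Hb.
  - exists j. split; auto. intros j' H. apply Hb. lia.
  - destruct (classic (exists j', j < j' /\ P j')) as [[j' [Hlt Pj']]|Hno].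
    + apply (IH j' Pj'). intros j'' H. apply Hb. lia.
    + exists j. split; auto. intros j' H Pj'. apply Hno; eauto.
Qed.

Lemma maxj (P: nat -> Prop) j k : P j -> (forall j', k < j' -> ~ P j') ->
  exists js, P js /\ forall j', js < j' -> ~ P j'.
Proof. intros Pj Hb. apply (maxj_aux P k j Pj). intros j' H. apply Hb. lia. Qed.

Fixpoint sumto (F: nat -> nat) (b: nat) : nat :=
  match b with 0 => 0 | S b' => sumto F b' + F b' end.
Lemma sumto_ge F b i : i < b -> F i <= sumto F b.
Proof.
  induction b; simpl; intros; [lia|].
  destruct (Nat.eq_dec i b); [subst; lia|]. specialize (IHb ltac:(lia)); lia.
Qed.

Theorem mainTheorem2 :
  forall U : (nat -> Prop) -> Prop, is_P_point U ->
  forall phi : option nat -> option (nat * nat) -> Prop,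
    (forall y, in_FS (phi y)) -> lsc U phi ->
    exists s : option nat -> option (nat * nat),
      continuous_YS U s /\ forall y, phi y (s y).
Proof.
intros U [[HU Hult] HP] phi Hphi Hlsc.
assert (Hcl: forall y, ~ phi y None -> forall m, exists k, forall j, k < j -> ~ phi y (Some (m,j))).
{ intros y Hy. exact (proj2 (Hphi y) Hy). }
assert (Hne: forall y, exists x, phi y x) by (intro y; exact (proj1 (Hphi y))).
pose (inh := inhabits (@None (nat*nat))).
destruct (classic (exists p, phi None (Some p))) as [[p Hp]|Hnp].
- pose (s := fun y : option nat => match y with None => Some p | Some n =>
      epsilon inh (fun x => phi (Some n) x /\ (phi (Some n) (Some p) -> x = Some p)) end).
  assert (Hs: forall n, phi (Some n) (s (Some n)) /\ (phi (Some n) (Some p) -> s (Some n) = Some p)).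
  { intro n.
    assert (Ex: exists x, phi (Some n) x /\ (phi (Some n) (Some p) -> x = Some p)).
    { destruct (classic (phi (Some n) (Some p))) as [H|H].
      - exists (Some p). auto.
      - destruct (Hne (Some n)) as [x Hx]. exists x. split; auto. intro; contradiction. }
    pose proof (epsilon_spec inh _ Ex) as H. exact H. }
  exists s. split.
  + intros W HW. red. intro HWs. simpl in HWs.
    assert (HO: S_open (fun x => x = Some p)) by (intro H; discriminate).
    pose proof (Hlsc _ HO) as H1. red in H1.
    specialize (H1 (ex_intro _ (Some p) (conj Hp eq_refl))).
    apply (f_mono U HU _ _ H1). intros n [x [Hx ->]]. destruct (Hs n) as [_ E].
    rewrite (E Hx). exact HWs.
  + intros [n|]; [apply Hs | exact Hp].
- assert (HN: phi None None).
  { destruct (Hne None) as [[p|] Hx]; [exfalso; apply Hnp; eauto | exact Hx]. }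
  destruct (Hult (fun n => phi (Some n) None)) as [HC0 | HB].
  + pose (s := fun y : option nat => match y with None => None | Some n =>
      epsilon inh (fun x => phi (Some n) x /\ (phi (Some n) None -> x = None)) end).
    assert (Hs: forall n, phi (Some n) (s (Some n)) /\ (phi (Some n) None -> s (Some n) = None)).
    { intro n.
      assert (Ex: exists x, phi (Some n) x /\ (phi (Some n) None -> x = None)).
      { destruct (classic (phi (Some n) None)) as [H|H].
        - exists None. auto.
        - destruct (Hne (Some n)) as [x Hx]. exists x. split; auto. intro; contradiction. }
      pose proof (epsilon_spec inh _ Ex) as H. exact H. }
    exists s. split.
    * intros W HW. red. intro HWs. simpl in HWs.
      apply (f_mono U HU _ _ HC0). intros n Hn. destruct (Hs n) as [_ E].
      rewrite (E Hn). exact HWs.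
    * intros [n|]; [apply Hs | exact HN].
  + destruct (classic (exists m0, forall N, U (fun n => exists j, N < j /\ phi (Some n) (Some (m0,j))))) as [[m0 Hm0]|Hnm].
    * pose (s := fun y : option nat => match y with None => None | Some n =>
        epsilon inh (fun x => phi (Some n) x /\ (~ phi (Some n) None -> (exists j, phi (Some n) (Some (m0,j))) -> exists j, x = Some (m0,j) /\ forall j', j < j' -> ~ phi (Some n) (Some (m0,j')))) end).
      assert (Hs: forall n, phi (Some n) (s (Some n)) /\ (~ phi (Some n) None -> (exists j, phi (Some n) (Some (m0,j))) -> exists j, s (Some n) = Some (m0,j) /\ forall j', j < j' -> ~ phi (Some n) (Some (m0,j')))).
      { intro n.
        assert (Ex: exists x, phi (Some n) x /\ (~ phi (Some n) None -> (exists j, phi (Some n) (Some (m0,j))) -> exists j, x = Some (m0,j) /\ forall j', j < j' -> ~ phi (Some n) (Some (m0,j')))).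
        { destruct (classic (~ phi (Some n) None /\ exists j, phi (Some n) (Some (m0,j)))) as [[Hb [j Hj]]|Hno].
          - destruct (Hcl _ Hb m0) as [k Hk].
            destruct (maxj (fun j => phi (Some n) (Some (m0,j))) j k Hj Hk) as [js [Hjs Hmax]].
            exists (Some (m0,js)). split; auto. intros _ _. exists js; auto.
          - destruct (Hne (Some n)) as [x Hx]. exists x. split; auto. intros H1 H2. exfalso; apply Hno; auto. }
        pose proof (epsilon_spec inh _ Ex) as H. exact H. }
      exists s. split.
      -- intros W HW. red. intro HWn. simpl in HWn. destruct (HW HWn m0) as [k Hk].
         pose proof (f_and _ HU _ _ (Hm0 k) HB) as H1. apply (f_mono _ HU _ _ H1).
         intros n [[j [Hkj Hj]] Hb]. destruct (Hs n) as [_ E].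
         destruct (E Hb (ex_intro _ j Hj)) as [js [Es Hmax]]. rewrite Es. apply Hk.
         destruct (Nat.lt_ge_cases k js); auto. exfalso. apply (Hmax j); [lia|exact Hj].
      -- intros [n|]; [apply Hs | exact HN].
    * assert (HNm: forall m, exists N, U (fun n => forall j, N < j -> ~ phi (Some n) (Some (m,j)))).
      { intro m. destruct (classic (exists N, U (fun n => forall j, N < j -> ~ phi (Some n) (Some (m,j))))) as [H|H]; auto.
        exfalso. apply Hnm. exists m. intro N.
        destruct (Hult (fun n => exists j, N < j /\ phi (Some n) (Some (m,j)))) as [H1|H1]; auto.
        exfalso. apply H. exists N. apply (f_mono _ HU _ _ H1). intros n Hn j Hj Hp. apply Hn; eauto. }
      pose (Nm := fun m => epsilon (inhabits 0) (fun N => U (fun n => forall j, N < j -> ~ phi (Some n) (Some (m,j))))).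
      assert (HV: forall m, U (fun n => forall j, Nm m < j -> ~ phi (Some n) (Some (m,j)))).
      { intro m. pose proof (epsilon_spec (inhabits 0) _ (HNm m)) as H. exact H. }
      pose (Z := fun n => exists m j, Nm m < j /\ phi (Some n) (Some (m,j))).
      assert (HZ: U (fun n => Z n /\ ~ phi (Some n) None)).
      { pose (W := fun x : option (nat*nat) => match x with None => True | Some (m,j) => Nm m < j end).
        assert (HW: S_open W). { intros _ m. exists (Nm m). intros j Hj. exact Hj. }
        pose proof (Hlsc W HW) as H1. red in H1. specialize (H1 (ex_intro _ None (conj HN I))).
        pose proof (f_and _ HU _ _ H1 HB) as H2. apply (f_mono _ HU _ _ H2).
        intros n [[x [Hx Hw]] Hb]. split; auto. destruct x as [[m j]|]; [|contradiction].
        exists m, j; split; auto. }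
      pose (R := fun n m => (exists j, Nm m < j /\ phi (Some n) (Some (m,j))) /\ forall m', m' < m -> forall j, Nm m' < j -> ~ phi (Some n) (Some (m',j))).
      pose (r := fun n => epsilon (inhabits 0) (R n)).
      assert (Hr: forall n, Z n -> R n (r n)).
      { intros n [m [j [H1 H2]]].
        destruct (least (fun m => exists j, Nm m < j /\ phi (Some n) (Some (m,j)))) as [m1 [Hm1 Hmin]]; [eauto|].
        assert (Ex: exists m, R n m).
        { exists m1. split; auto. intros m' Hlt j' Hj' Hp. apply (Hmin m' Hlt). eauto. }
        pose proof (epsilon_spec (inhabits 0) _ Ex) as H. exact H. }
      destruct (HP r) as [A [HA [[c Hc] | Hfin]]].
      { exfalso. destruct (f_ne _ HU _ (f_and _ HU _ _ (f_and _ HU _ _ HA HZ) (HV c))) as [n [[An [Zn _]] Vn]].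
        destruct (Hr n Zn) as [[j [Hj Hp]] _]. rewrite (Hc n An) in Hj, Hp. exact (Vn j Hj Hp). }
      pose (Nf := fun k => epsilon (inhabits 0) (fun N => forall n, A n -> r n = k -> n < N)).
      assert (HNf: forall k n, A n -> r n = k -> n < Nf k).
      { intros k. pose proof (epsilon_spec (inhabits 0) _ (Hfin k)) as H. exact H. }
      pose (Kb := fun n m => epsilon (inhabits 0) (fun k => forall j, k < j -> ~ phi (Some n) (Some (m,j)))).
      assert (HKb: forall n m, ~ phi (Some n) None -> forall j, Kb n m < j -> ~ phi (Some n) (Some (m,j))).
      { intros n m Hb. pose proof (epsilon_spec (inhabits 0) _ (Hcl _ Hb m)) as H. exact H. }
      pose (Bd := fun m => sumto Nf m).
      pose (s := fun y : option nat => match y with None => None | Some n =>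
        epsilon inh (fun x => phi (Some n) x /\ (~ phi (Some n) None -> Z n -> exists j, x = Some (r n, j) /\ forall j', j < j' -> ~ phi (Some n) (Some (r n, j')))) end).
      assert (Hs: forall n, phi (Some n) (s (Some n)) /\ (~ phi (Some n) None -> Z n -> exists j, s (Some n) = Some (r n, j) /\ forall j', j < j' -> ~ phi (Some n) (Some (r n, j')))).
      { intro n.
        assert (Ex: exists x, phi (Some n) x /\ (~ phi (Some n) None -> Z n -> exists j, x = Some (r n, j) /\ forall j', j < j' -> ~ phi (Some n) (Some (r n, j')))).
        { destruct (classic (~ phi (Some n) None /\ Z n)) as [[Hb Zn]|Hno].
          - destruct (Hr n Zn) as [[j [_ Hj]] _]. destruct (Hcl _ Hb (r n)) as [k Hk].
            destruct (maxj (fun j => phi (Some n) (Some (r n, j))) j k Hj Hk) as [js [Hjs Hmax]].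
            exists (Some (r n, js)). split; auto. intros _ _. exists js. auto.
          - destruct (Hne (Some n)) as [x Hx]. exists x. split; auto. intros H1 H2; exfalso; auto. }
        pose proof (epsilon_spec inh _ Ex) as H. exact H. }
      exists s. split; [| intros [n|]; [apply Hs| exact HN]].
      intros W HW. red. intro HWn. simpl in HWn.
      pose (f := fun m => epsilon (inhabits 0) (fun k => forall j, k < j -> W (Some (m,j)))).
      assert (Hf: forall m j, f m < j -> W (Some (m,j))).
      { intro m. pose proof (epsilon_spec (inhabits 0) _ (HW HWn m)) as H. exact H. }
      destruct (Hult (fun n => W (s (Some n)))) as [H|HC]; [exact H| exfalso].
      pose (g := fun m => Nm m + f m + sumto (fun i => Kb i m) (Bd m)).
      pose (Wg := fun x : option (nat*nat) => match x with None => True | Some (m,j) => g m < j end).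
      assert (HWg: S_open Wg). { intros _ m. exists (g m). intros j Hj. exact Hj. }
      pose proof (Hlsc Wg HWg) as H1. red in H1. specialize (H1 (ex_intro _ None (conj HN I))).
      destruct (f_ne _ HU _ (f_and _ HU _ _ (f_and _ HU _ _ H1 HC) (f_and _ HU _ _ HA HZ))) as [n [[[x [Hx Hwx]] HnW] [An [Zn Hb]]]].
      cbv beta in *.
      destruct x as [[m j]|]; [| exact (Hb Hx)].
      simpl in Hwx.
      destruct (Hr n Zn) as [_ Hmin].
      destruct (lt_eq_lt_dec m (r n)) as [[Hlt|Heq]|Hgt].
      -- apply (Hmin m Hlt j); [unfold g in Hwx; lia | exact Hx].
      -- destruct (Hs n) as [_ E]. destruct (E Hb Zn) as [js [Es Hmax]].
         assert (js <= f (r n)).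
         { destruct (Nat.le_gt_cases js (f (r n))); auto. exfalso. apply HnW. rewrite Es. apply Hf. auto. }
         subst m. apply (Hmax j); [unfold g in Hwx; lia | exact Hx].
      -- assert (Hn: n < Bd m).
         { pose proof (HNf (r n) n An eq_refl). pose proof (sumto_ge Nf m (r n) Hgt). unfold Bd. lia. }
         pose proof (sumto_ge (fun i => Kb i m) (Bd m) n Hn).
         apply (HKb n m Hb j); [unfold g in Hwx; lia | exact Hx].
Qed.
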